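(* (a) Suppose that $G$ is a noncyclotomic bipartite graph having a vertex $v$ such that the induced subgraph on $V(G)\setminus\{v\}$ is cyclotomic. Then $G$ is a Salem graph. (b) Suppose that $G$ is a noncyclotomic bipartite graph with the property that for each minimal induced subgraph $M$ of $G$, the complementary induced subgraph $G|_{V(G)\setminus V(M)}$ is cyclotomic. Then $G$ is a Salem graph.
   Context: Graphs are finite simple graphs; eigenvalues are those of the adjacency matrix; the index of a graph is its largest eigenvalue. A graph is cyclotomic if all its eigenvalues lie in $[-2,2]$. A minimal induced subgraph of $G$ means an induced subgraph of $G$ with index greater than $2$ such that every induced subgraph of it obtained by deleting one vertex has index at most $2$. A bipartite graph $G$ is a Salem graph if it has exactly one eigenvalue $\lambda>2$ and only the eigenvalue $-\lambda$ in $(-\infty,-2)$. *)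

(* Defs.v *)
From HB Require Import structures.
From mathcomp Require Import all_boot all_order all_algebra.
From mathcomp Require Import reals.
Unset Printing Implicit Defensive.
Import Order.TTheory GRing.Theory Num.Theory.
Local Open Scope ring_scope.

Definition simple_graph (T : finType) (e : rel T) : Prop :=
  (forall x y, e x y = e y x) /\ (forall x, ~~ e x x).
Arguments simple_graph {T}.

Definition adj (R : realType) (T : finType) (e : rel T) (S : {set T})
  : 'M[R]_#|S| :=
  \matrix_(i, j) (e (enum_val i) (enum_val j))%:R.
Arguments adj R {T}.

Definition cpoly (R : realType) (T : finType) (e : rel T) (S : {set T})
  : {poly R} := char_poly (adj R e S).
Arguments cpoly R {T}.

Definition eigenvalue_of (R : realType) (T : finType) (e : rel T)
  (S : {set T}) (mu : R) : Prop := root (cpoly R e S) mu.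
Arguments eigenvalue_of R {T}.

Definition cyclotomic (R : realType) (T : finType) (e : rel T)
  (S : {set T}) : Prop :=
  forall mu, eigenvalue_of R e S mu -> -2 <= mu <= 2.
Arguments cyclotomic R {T}.

(* "index (largest eigenvalue) > 2", i.e. some eigenvalue exceeds 2 *)
Definition index_gt2 (R : realType) (T : finType) (e : rel T)
  (S : {set T}) : Prop :=
  exists mu, eigenvalue_of R e S mu /\ 2 < mu.
Arguments index_gt2 R {T}.

Definition minimal_induced (R : realType) (T : finType) (e : rel T)
  (M : {set T}) : Prop :=
  index_gt2 R e M /\ forall v, v \in M -> ~ index_gt2 R e (M :\ v).
Arguments minimal_induced R {T}.

Definition bipartite (T : finType) (e : rel T) : Prop :=
  exists X : {set T}, forall x y, e x y -> (x \in X) != (y \in X).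
Arguments bipartite {T}.

Definition salem_graph (R : realType) (T : finType) (e : rel T) : Prop :=
  bipartite e /\
  exists lambda : R, 2 < lambda /\
    mup lambda (cpoly R e setT) = 1%N /\
    (forall mu, eigenvalue_of R e setT mu -> 2 < mu -> mu = lambda) /\
    mup (- lambda) (cpoly R e setT) = 1%N /\
    (forall mu, eigenvalue_of R e setT mu -> mu < -2 -> mu = - lambda).

Arguments salem_graph R {T}.

(* Main.v *)
Require Import Defs.
From mathcomp Require Import all_boot all_order all_algebra.
From mathcomp Require Import reals.
From mathcomp Require Import complex ring lra.
From Stdlib Require Import Classical.
Import Order.TTheory GRing.Theory Num.Theory.
Local Open Scope ring_scope.
Local Open Scope sesquilinear_scope.
Set Implicit Arguments.
Unset Strict Implicit.
Section S.
Variable R : realType.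
Local Notation C := (R[i]).
Local Notation toC := (real_complex R).

Lemma spec_real n (A : 'M[R]_n) : A^T = A ->
  exists (P : 'M[C]_n) (d : 'rV[C]_n),
    [/\ P \is unitarymx, d \is a realmx & map_mx toC A = invmx P *m diag_mx d *m P].
Proof.
move=> AT.
have Aherm : map_mx toC A \is hermsymmx.
  apply: realsym_hermsym.
    apply/is_hermitianmxP; rewrite expr0 scale1r.
    apply/matrixP => i j; rewrite !mxE.
    by rewrite -{1}AT mxE.
  by apply/mxOverP => i j; rewrite mxE; apply/complex_realP; exists (A i j).
exists (spectralmx (map_mx toC A)), (spectral_diag (map_mx toC A)); split.
- exact: spectral_unitarymx.
- exact: (hermitian_spectral_diag_real Aherm).
- exact: (elimT (@orthomx_spectralP _ _ (map_mx toC A)) (hermitian_normalmx Aherm)).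
Qed.
Lemma count_card (T : eqType) n (f : 'I_n -> T) x : count_mem x [seq f i | i <- enum 'I_n] = #|[pred i | f i == x]|.
Proof. rewrite enumT count_map cardE /enum_mem size_filter. apply: eq_count => i. by []. Qed.
Import GRing.Theory.
Local Open Scope ring_scope.
Lemma char_poly_conj (K : fieldType) n (V Q B : 'M[K]_n) : V *m Q = 1%:M ->
  char_poly (V *m B *m Q) = char_poly B.
Proof.
move=> VQ.
set mQi := map_mx polyC V; set mQ := map_mx polyC Q.
have hQ : mQi *m mQ = 1%:M by rewrite -map_mxM VQ map_mx1.
have hQ' : \det mQi * \det mQ = 1 by rewrite -det_mulmx hQ det1.
rewrite /char_poly /char_poly_mx map_mxM map_mxM -/mQi -/mQ.
have hX : ('X%:M : 'M[{poly K}]_n) = mQi *m 'X%:M *m mQ.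
  by rewrite -mulmxA -scalar_mxC mulmxA hQ mul1mx.
rewrite [in LHS]hX -mulmxBl -mulmxBr !det_mulmx mulrC mulrA [\det mQ * _]mulrC hQ' mul1r.
done.
Qed.

Lemma mup_map {F K : fieldType} (f : {rmorphism F -> K}) x q : q != 0 ->
  mup (f x) (map_poly f q) = mup x q.
Proof.
move=> q0; have fq0 : map_poly f q != 0 by rewrite map_poly_eq0.
apply/eqP; rewrite eqn_leq; apply/andP; split.
  by rewrite mup_leq // -map_polyXsubC -rmorphXn dvdp_map -mup_leq.
by rewrite mup_geq // -map_polyXsubC -rmorphXn dvdp_map -mup_geq.
Qed.
Lemma mup_spec n (A : 'M[R]_n) (V Q : 'M[C]_n) (d : 'rV[C]_n) : V *m Q = 1%:M ->
  map_mx toC A = V *m diag_mx d *m Q ->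
  forall mu, mup mu (char_poly A) = #|[pred i | d 0 i == toC mu]|.
Proof.
move=> Qu hA mu.
rewrite -(mup_map toC) ?monic_neq0 ?char_poly_monic //.
rewrite map_char_poly hA char_poly_conj // char_poly_trig ?diag_mx_is_trig //.
rewrite (eq_bigr (fun i => 'X - (d 0 i)%:P)); last by move=> i _; rewrite mxE eqxx mulr1n.
rewrite -count_card -mu_prod_XsubC big_map enumT.
by rewrite [index_enum _]unlock.
Qed.

Lemma spec_root n (A : 'M[R]_n) (V Q : 'M[C]_n) (d : 'rV[C]_n) : V *m Q = 1%:M ->
  map_mx toC A = V *m diag_mx d *m Q ->
  forall mu, root (char_poly A) mu = (0 < #|[pred i | d 0%R i == toC mu]|)%N.
Proof.
move=> Qu hA mu; rewrite -(mup_spec Qu hA) -XsubC_dvd ?dvdp_XsubCl //.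
by rewrite monic_neq0 ?char_poly_monic.
Qed.

Variable T : finType.
Variable e : rel T.
Hypothesis e_sym : forall x y, e x y = e y x.

Definition Qc (f : T -> C) := \sum_x \sum_y f x * (e x y)%:R * (f y)^*.
Definition Nc (f : T -> C) := \sum_x f x * (f x)^*.

Lemma adj_sym S : (adj R e S)^T = adj R e S.
Proof. by apply/matrixP => i j; rewrite !mxE e_sym. Qed.

Lemma sum_restr (S : {set T}) (F : T -> C) : (forall x, x \notin S -> F x = 0) ->
  \sum_x F x = \sum_(i < #|S|) F (enum_val i).
Proof.
move=> hF; rewrite -big_enum_val.
rewrite [RHS]big_mkcond; apply: eq_bigr => x _.
by case: ifP => // /negbT /hF.
Qed.

Definition vec_of (S : {set T}) (f : T -> C) : 'rV[C]_#|S| := \row_i f (enum_val i).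

Lemma form_mx (S : {set T}) (f : T -> C) : (forall x, x \notin S -> f x = 0) ->
  Qc f = (vec_of S f *m map_mx toC (adj R e S) *m (vec_of S f)^t*) 0 0.
Proof.
move=> hf; rewrite /Qc exchange_big /= (sum_restr (S := S)); last first.
  by move=> y /hf ->; rewrite big1 // => x _; rewrite conjC0 mulr0.
rewrite !mxE; apply: eq_bigr => j _.
rewrite (sum_restr (S := S)); last by move=> x /hf ->; rewrite -mulrA mul0r.
rewrite !mxE big_distrl /=; apply: eq_bigr => k _.
by rewrite !mxE rmorph_nat.
Qed.

Lemma norm_mx (S : {set T}) (f : T -> C) : (forall x, x \notin S -> f x = 0) ->
  Nc f = (vec_of S f *m (vec_of S f)^t*) 0 0.
Proof.
move=> hf; rewrite /Nc (sum_restr (S := S)); last by move=> x /hf ->; rewrite mul0r.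
by rewrite !mxE; apply: eq_bigr => j _; rewrite !mxE.
Qed.

Lemma trCmul m n p (A : 'M[C]_(m, n)) (B : 'M[C]_(n, p)) :
  (A *m B)^t* = B^t* *m A^t*.
Proof. by rewrite trmx_mul map_mxM. Qed.

Lemma quad_diag n (u d : 'rV[C]_n) :
  (u *m diag_mx d *m u^t*) 0 0 = \sum_j d 0 j * (u 0 j * (u 0 j)^*).
Proof.
rewrite mxE; apply: eq_bigr => j _.
by rewrite mul_mx_diag !mxE mulrAC mulrC.
Qed.

Lemma quad_id n (u : 'rV[C]_n) :
  (u *m u^t*) 0 0 = \sum_j u 0 j * (u 0 j)^*.
Proof. by rewrite mxE; apply: eq_bigr => j _; rewrite !mxE. Qed.

Lemma rayleigh_le (S : {set T}) (c : R) :
  (forall mu, eigenvalue_of R e S mu -> mu <= c) ->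
  forall f, (forall x, x \notin S -> f x = 0) -> Qc f <= toC c * Nc f.
Proof.
move=> hc f hf.
have [P [d [Pu dr hA]]] := spec_real (adj_sym S).
have Punit := unitarymx_unit Pu.
rewrite (form_mx hf) (norm_mx hf).
set w := vec_of S f; set u := w *m P^t*.
have hPP : P^t* *m P = 1%:M by rewrite -invmx_unitary // mulVmx.
have E1 : w *m map_mx toC (adj R e S) *m w^t* = u *m diag_mx d *m u^t*.
  by rewrite hA invmx_unitary // /u trCmul trmxCK !mulmxA.
have E2 : w *m w^t* = u *m u^t*.
  by rewrite /u trCmul trmxCK mulmxA -[w *m _ *m P]mulmxA hPP mulmx1.
rewrite E1 E2 quad_diag quad_id mulr_sumr; apply: ler_sum => j _.
rewrite ler_wpM2r ?mul_conjC_ge0 //.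
have /mxOverP /(_ 0 j) /complex_realP [r hr] := dr.
rewrite hr lecR; apply: hc.
rewrite /eigenvalue_of /cpoly (spec_root (mulVmx Punit) hA); apply/card_gt0P.
by exists j; rewrite inE hr.
Qed.

Lemma mup_sym S : bipartite e ->
  forall mu, mup (- mu) (cpoly R e S) = mup mu (cpoly R e S).
Proof.
case=> X hX mu.
have [P [d [Pu dr hA]]] := spec_real (adj_sym S).
have Punit := unitarymx_unit Pu.
pose s : 'rV[C]_#|S| := \row_i (if enum_val i \in X then 1 else -1).
pose Dm := diag_mx s.
have DD : Dm *m Dm = 1%:M.
  rewrite mulmx_diag -diag_const_mx; congr diag_mx; apply/rowP => j.
  by rewrite !mxE; case: ifP => _; [rewrite mulr1 | rewrite mulrNN mulr1].
have hneg : Dm *m map_mx toC (adj R e S) *m Dm = - map_mx toC (adj R e S).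
  apply/matrixP => i j; rewrite mul_mx_diag mul_diag_mx !mxE.
  have := hX (enum_val i) (enum_val j).
  case: (e (enum_val i) (enum_val j)) => /= h; last first.
    by rewrite rmorph0 mulr0 mul0r oppr0.
  move: h; rewrite rmorph1 mulr1.
  by case: (enum_val i \in X); case: (enum_val j \in X) => /(_ isT) /= h;
    rewrite ?mulr1 ?mul1r.
have hA' : map_mx toC (adj R e S) = (Dm *m invmx P) *m diag_mx (- d) *m (P *m Dm).
  have -> : diag_mx (- d) = - diag_mx d by apply/matrixP=> i j; rewrite !mxE mulNrn.
  rewrite -[LHS]opprK -hneg hA mulmxN mulNmx !mulmxA.
  done.
have VQ : (Dm *m invmx P) *m (P *m Dm) = 1%:M.
  by rewrite mulmxA -(mulmxA Dm) mulVmx // mulmx1 DD.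
rewrite /cpoly (mup_spec (mulVmx Punit) hA) (mup_spec VQ hA').
by apply: eq_card => i; rewrite !inE mxE rmorphN /= eqr_oppLR.
Qed.

Lemma conjR (r : R) : (toC r)^* = toC r.
Proof. by apply: conj_Creal; apply/complex_realP; exists r. Qed.

Definition QR (f : T -> R) := \sum_x \sum_y f x * (e x y)%:R * f y.
Definition NR (f : T -> R) := \sum_x f x * f x.
Definition eigR (f : T -> R) (c : R) := forall t, \sum_s (e t s)%:R * f s = c * f t.

Lemma rayleigh_real (S : {set T}) (c : R) :
  (forall mu, eigenvalue_of R e S mu -> mu <= c) ->
  forall f, (forall x, x \notin S -> f x = 0) -> QR f <= c * NR f.
Proof.
move=> hc f hf.
have := @rayleigh_le S c hc (fun t => toC (f t)).
have EQ : Qc (fun t => toC (f t)) = toC (QR f).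
  rewrite /Qc /QR rmorph_sum; apply: eq_bigr => x _.
  rewrite rmorph_sum; apply: eq_bigr => y _.
  by rewrite !rmorphM rmorph_nat conjR.
have EN : Nc (fun t => toC (f t)) = toC (NR f).
  rewrite /Nc /NR rmorph_sum; apply: eq_bigr => x _.
  by rewrite !rmorphM conjR.
rewrite EQ EN -rmorphM lecR; apply.
by move=> x /hf ->; rewrite rmorph0.
Qed.

Lemma ex_minimal (P : {set T}) : index_gt2 R e P ->
  exists M : {set T}, M \subset P /\ minimal_induced R e M.
Proof.
have [k hk] := ubnP #|P|; elim: k P hk => // k IH P hk hP.
case: (classic (minimal_induced R e P)) => hm; first by exists P.
have [v [vP hv]] : exists v, v \in P /\ index_gt2 R e (P :\ v).
  apply: NNPP => hn; apply: hm; split => // v vP hv; apply: hn; by exists v.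
have hk' : (#|P :\ v| < k)%N.
  by move: hk; rewrite (cardsD1 v P) vP add1n ltnS.
have [M [sM mM]] := IH (P :\ v) hk' hv.
by exists M; split => //; apply: subset_trans sM (subD1set P v).
Qed.

Definition pos (f : T -> R) := fun t => if 0 < f t then f t else 0.

Lemma pos_ge0 f t : 0 <= pos f t.
Proof. by rewrite /pos; case: ifP => // /ltW. Qed.

Lemma pos_ge f t : f t <= pos f t.
Proof. by rewrite /pos; case: ifP => // /negbT; rewrite -leNgt. Qed.

Lemma pos_mul f t : pos f t * f t = pos f t * pos f t.
Proof. by rewrite /pos; case: ifP => //; rewrite !mul0r. Qed.

Lemma QR_rearr f : QR f = \sum_t f t * \sum_s (e t s)%:R * f s.
Proof.
by apply: eq_bigr => t _; rewrite mulr_sumr; apply: eq_bigr => s _; rewrite mulrA.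
Qed.

Lemma pos_part f c : eigR f c -> 2 < c -> (exists t, 0 < f t) ->
  2 * NR (pos f) < QR (pos f).
Proof.
move=> hf hc [t0 ht0].
have hN : 0 < NR (pos f).
  rewrite /NR (bigD1 t0) //=; apply: ltr_wpDr.
    by apply: sumr_ge0 => t _; rewrite mulr_ge0 ?pos_ge0.
  by rewrite /pos ht0 mulr_gt0.
have h1 : c * NR (pos f) <= QR (pos f).
  rewrite QR_rearr /NR mulr_sumr; apply: ler_sum => t _.
  apply: (@le_trans _ _ (pos f t * (c * f t))).
    by rewrite [X in _ <= X]mulrCA pos_mul.
  rewrite -hf ler_wpM2l ?pos_ge0 //; apply: ler_sum => s _.
  by rewrite ler_wpM2l ?ler0n ?pos_ge.
by apply: lt_le_trans h1; rewrite ltr_pM2r.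
Qed.

Section HypB.
Hypothesis hb : forall M, minimal_induced R e M -> cyclotomic R e (~: M).

Lemma contra_b f g : (forall t, f t != 0 -> g t = 0) ->
  2 * NR f < QR f -> QR g <= 2 * NR g.
Proof.
move=> hfg hf.
pose P := [set t | f t != 0].
have hP : index_gt2 R e P.
  apply: NNPP => hn.
  have H : QR f <= 2 * NR f.
    apply: (@rayleigh_real P 2).
      move=> mu hmu; rewrite leNgt; apply/negP => h; apply: hn; by exists mu.
    by move=> x; rewrite inE negbK => /eqP.
  by move: H; rewrite leNgt hf.
have [M [sM mM]] := ex_minimal hP.
have hc := hb mM.
apply: (@rayleigh_real (~: M)).
  by move=> mu /hc /andP [].
move=> t; rewrite inE negbK => tM; apply: hfg.
by have := subsetP sM t tM; rewrite inE.
Qed.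

Lemma eig_scale f c k : eigR f c -> eigR (fun t => k * f t) c.
Proof.
move=> hf t.
under eq_bigr do rewrite mulrCA.
by rewrite -mulr_sumr hf mulrCA.
Qed.

Lemma mixed_contra f c : eigR f c -> 2 < c -> (exists t, 0 < f t) ->
  (exists s, f s < 0) -> False.
Proof.
move=> hf hc hp [s hs].
have hf' : eigR (fun t => (-1) * f t) c := eig_scale (-1) hf.
have hdisj : forall t, pos f t != 0 -> pos (fun t => (-1) * f t) t = 0.
  move=> t; rewrite /pos; case: ifP => h; last by rewrite eqxx.
  move=> _.
  by rewrite mulN1r oppr_gt0 (lt_gtF h).
have hneg : exists t, 0 < (-1) * f t by exists s; rewrite mulN1r oppr_gt0.
have := contra_b hdisj (pos_part hf hc hp).
by rewrite leNgt (pos_part hf' hc hneg).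
Qed.

Lemma normalize f c : eigR f c -> 2 < c -> (exists t, f t != 0) ->
  exists k : R, k * k = 1 /\ (forall t, 0 <= k * f t) /\
    (exists t, 0 < k * f t) /\ eigR (fun t => k * f t) c.
Proof.
move=> hf hc [t0 ht0].
pose k : R := if f t0 < 0 then -1 else 1.
have hk : k * k = 1 by rewrite /k; case: ifP; rewrite ?mulrNN mulr1.
have hpos : 0 < k * f t0.
  rewrite /k; case: ifP => h; first by rewrite mulN1r oppr_gt0.
  by rewrite mul1r lt_neqAle eq_sym ht0 /= leNgt h.
have he := eig_scale k hf.
exists k; split => //; split; last by split => //; exists t0.
move=> t; rewrite leNgt; apply/negP => hneg.
by apply: (mixed_contra he hc); [exists t0 | exists t].
Qed.

Lemma b_core x y a b : eigR x a -> eigR y b -> 2 < a -> 2 < b ->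
  (exists t, x t != 0) -> (exists t, y t != 0) ->
  \sum_t x t * y t = 0 -> False.
Proof.
move=> hx hy ha hb' nx ny ort.
have [k1 [_ [x0 [xp xe]]]] := normalize hx ha nx.
have [k2 [_ [y0 [yp ye]]]] := normalize hy hb' ny.
have ort' : \sum_t (k1 * x t) * (k2 * y t) = 0.
  under eq_bigr do rewrite mulrACA.
  by rewrite -mulr_sumr ort mulr0.
have hz := psumr_eq0P (fun t _ => mulr_ge0 (x0 t) (y0 t)) ort'.
have hdisj : forall t, pos (fun t => k1 * x t) t != 0 -> pos (fun t => k2 * y t) t = 0.
  move=> t; rewrite /pos; case: ifP => h; last by rewrite eqxx.
  move=> _.
  have := hz t isT; move/eqP; rewrite mulf_eq0 => /orP [/eqP h0 | /eqP ->].
    by move: h; rewrite h0 ltxx.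
  by rewrite ltxx.
have := contra_b hdisj (pos_part xe ha xp).
by rewrite leNgt (pos_part ye hb' yp).
Qed.

End HypB.

Definition eigC (g : T -> C) (c : R) := forall t, \sum_s (e t s)%:R * g s = toC c * g t.
Definition dotC (g h : T -> C) := \sum_t g t * (h t)^*.

Lemma Re_mulr (z : C) r : complex.Re (toC r * z) = r * complex.Re z.
Proof. by case: z => a b /=; rewrite mul0r subr0. Qed.
Lemma Im_mulr (z : C) r : complex.Im (toC r * z) = r * complex.Im z.
Proof. by case: z => a b /=; rewrite mul0r addr0. Qed.

Lemma Re_sum (F : T -> C) : complex.Re (\sum_i F i) = \sum_i complex.Re (F i).
Proof. by rewrite raddf_sum. Qed.
Lemma Im_sum (F : T -> C) : complex.Im (\sum_i F i) = \sum_i complex.Im (F i).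
Proof. by rewrite raddf_sum. Qed.

Lemma eigC_Re g c : eigC g c -> eigR (fun t => complex.Re (g t)) c.
Proof.
move=> h t; have := congr1 (@complex.Re R) (h t).
rewrite Re_sum Re_mulr => <-; apply: eq_bigr => s _.
by rewrite -(rmorph_nat toC) Re_mulr.
Qed.

Lemma eigC_Im g c : eigC g c -> eigR (fun t => complex.Im (g t)) c.
Proof.
move=> h t; have := congr1 (@complex.Im R) (h t).
rewrite Im_sum Im_mulr => <-; apply: eq_bigr => s _.
by rewrite -(rmorph_nat toC) Im_mulr.
Qed.

Lemma eig_orth x y a b : eigR x a -> eigR y b -> a != b -> \sum_t x t * y t = 0.
Proof.
move=> hx hy hab.
have E : a * \sum_t x t * y t = b * \sum_t x t * y t.
  rewrite !mulr_sumr.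
  transitivity (\sum_t \sum_s (e t s)%:R * x s * y t).
    apply: eq_bigr => t _; rewrite mulrA -hx mulr_suml; done.
  rewrite exchange_big /=; apply: eq_bigr => s _.
  rewrite mulrCA -hy mulr_sumr; apply: eq_bigr => t _.
  rewrite (e_sym s t); ring.
move/eqP: E; rewrite -subr_eq0 -mulrBl mulf_eq0 subr_eq0 (negbTE hab) /=.
by move/eqP.
Qed.

Lemma eig_comb x y c al be : eigR x c -> (eigR y c \/ be = 0) ->
  eigR (fun t => al * x t + be * y t) c.
Proof.
move=> hx hy t.
have h1 := eig_scale al hx t.
under eq_bigr do rewrite mulrDr.
rewrite big_split /= h1.
case: hy => [hy | ->].
  by rewrite (eig_scale be hy t) mulrDr.
rewrite big1; last by move=> s _; rewrite mul0r mulr0.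
by rewrite mul0r !addr0.
Qed.

Lemma sqsum_gt0 (x : T -> R) : (exists t, x t != 0) -> 0 < \sum_t x t * x t.
Proof.
case=> t0 h0; rewrite (bigD1 t0) //=; apply: ltr_wpDr.
  by apply: sumr_ge0 => t _; rewrite -expr2 sqr_ge0.
by rewrite lt_neqAle eq_sym mulf_neq0 //= -expr2 sqr_ge0.
Qed.

Lemma complex_eta (z : C) : z = Complex (complex.Re z) (complex.Im z).
Proof. by case: z. Qed.

Lemma real_pair g h a b : eigC g a -> eigC h b -> dotC g h = 0 ->
  dotC g g != 0 -> dotC h h != 0 ->
  exists x y, [/\ eigR x a, eigR y b, (exists t, x t != 0),
                  (exists t, y t != 0) & \sum_t x t * y t = 0].
Proof.
move=> hg hh ogh ngg nhh.
pose gr t := complex.Re (g t); pose gi t := complex.Im (g t).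
pose hr t := complex.Re (h t); pose hi t := complex.Im (h t).
have egr : eigR gr a := eigC_Re hg.
have egi : eigR gi a := eigC_Im hg.
have ehr : eigR hr b := eigC_Re hh.
have ehi : eigR hi b := eigC_Im hh.
have [x [ex nx hxg]] : exists x, [/\ eigR x a, (exists t, x t != 0) &
    (x = gr \/ x = gi)].
  case: (classic (exists t, gr t != 0)) => hr0; first by exists gr; split => //; left.
  exists gi; split => //; last by right.
  apply: NNPP => hn; apply/negP: ngg; apply/negPn/eqP; rewrite /dotC big1 // => t _.
  have h1 : gr t = 0 by apply: NNPP => h'; apply: hr0; exists t; apply/eqP.
  have h2 : gi t = 0 by apply: NNPP => h'; apply: hn; exists t; apply/eqP.
  by rewrite (complex_eta (g t)) -/(gr t) -/(gi t) h1 h2 mul0r.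
pose dxx := \sum_t x t * x t.
have dpos : 0 < dxx := sqsum_gt0 nx.
pose gs (y0 : T -> R) t := dxx * y0 t + (- \sum_s x s * y0 s) * x t.
have gs_orth y0 : \sum_t x t * gs y0 t = 0.
  rewrite (eq_bigr (fun t => dxx * (x t * y0 t) + (- \sum_s x s * y0 s) * (x t * x t)));
    last by move=> t _; rewrite /gs; ring.
  by rewrite big_split /= -!mulr_sumr -/dxx; ring.
have gs_eig y0 : eigR y0 b -> eigR (gs y0) b.
  move=> hy0; apply: eig_comb => //.
  case: (eqVneq a b) => [<- | hab]; first by left.
  by right; rewrite (eig_orth ex hy0 hab) oppr0.
case: (classic (exists t, gs hr t != 0)) => [nr | zr].
  by exists x, (gs hr); split => //; apply: gs_eig.
case: (classic (exists t, gs hi t != 0)) => [ni | zi].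
  by exists x, (gs hi); split => //; apply: gs_eig.
exfalso.
pose l1 := (\sum_s x s * hr s) / dxx; pose l2 := (\sum_s x s * hi s) / dxx.
have dx0 : dxx != 0 by rewrite gt_eqF.
have hrE t : hr t = l1 * x t.
  have : gs hr t = 0 by apply: NNPP => h'; apply: zr; exists t; apply/eqP.
  rewrite /gs /l1 => /eqP; rewrite addr_eq0 => /eqP E.
  apply: (mulfI dx0); rewrite E; field; done.
have hiE t : hi t = l2 * x t.
  have : gs hi t = 0 by apply: NNPP => h'; apply: zi; exists t; apply/eqP.
  rewrite /gs /l2 => /eqP; rewrite addr_eq0 => /eqP E.
  apply: (mulfI dx0); rewrite E; field; done.
pose L := Complex l1 l2.
have hE t : h t = L * toC (x t).
  rewrite (complex_eta (h t)) -/(hr t) -/(hi t) hrE hiE /L /=.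
  by apply/eqP; rewrite eq_complex /= !mulr0 subr0 add0r !eqxx.
have L0 : L != 0.
  apply/negP => /eqP L0; apply/negP: nhh; apply/negPn/eqP.
  by rewrite /dotC big1 // => t _; rewrite hE L0 !mul0r.
pose G := \sum_t g t * toC (x t).
have G0 : G != 0.
  case: hxg => xE.
    apply/negP => /eqP /(congr1 (@complex.Re R)); rewrite Re_sum.
    rewrite (eq_bigr (fun t => x t * x t)); last first.
      by move=> t _; rewrite mulrC Re_mulr xE.
    by move=> /eqP; rewrite -/dxx (negbTE dx0).
  apply/negP => /eqP /(congr1 (@complex.Im R)); rewrite Im_sum.
  rewrite (eq_bigr (fun t => x t * x t)); last first.
    by move=> t _; rewrite mulrC Im_mulr xE.
  by move=> /eqP; rewrite -/dxx (negbTE dx0).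
have : dotC g h = L^* * G.
  rewrite /dotC /G mulr_sumr; apply: eq_bigr => t _.
  by rewrite hE rmorphM /= conjR mulrCA.
by rewrite ogh => /esym /eqP; rewrite mulf_eq0 conjC_eq0 (negbTE L0) (negbTE G0).
Qed.

Local Notation n := #|[set: T]|.
Local Notation Ac := (map_mx toC (adj R e [set: T])).

Definition rt (t : T) : 'I_n := enum_rank_in (in_setT t) t.
Lemma rtK (l : 'I_n) : rt (enum_val l) = l.
Proof. by rewrite /rt enum_valK_in. Qed.
Lemma rtV t : enum_val (rt t) = t.
Proof. by rewrite /rt enum_rankK_in // in_setT. Qed.

Lemma sumT (F : T -> C) : \sum_t F t = \sum_(l : 'I_n) F (enum_val l).
Proof. by apply: (@sum_restr [set: T]) => x; rewrite in_setT. Qed.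

Lemma eig_rows (P : 'M[C]_n) d : P \is unitarymx ->
  Ac = invmx P *m diag_mx d *m P ->
  forall i a, d 0 i = toC a -> eigC (fun t => P i (rt t)) a.
Proof.
move=> Pu hA i a hda t.
have Punit := unitarymx_unit Pu.
have hPA : P *m Ac = diag_mx d *m P.
  by rewrite hA !mulmxA mulmxV // mul1mx.
have := congr1 (fun M : 'M[C]_n => M i (rt t)) hPA; rewrite /= mul_diag_mx !mxE hda => <-.
rewrite sumT; apply: eq_bigr => l _.
by rewrite rtK !mxE rtV rmorph_nat e_sym mulrC.
Qed.

Lemma dot_rows (P : 'M[C]_n) : P \is unitarymx ->
  forall i j, dotC (fun t => P i (rt t)) (fun t => P j (rt t)) = (i == j)%:R.
Proof.
move=> /unitarymxP Pu i j.
have := congr1 (fun M : 'M[C]_n => M i j) Pu; rewrite /= !mxE => <-.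
rewrite /dotC sumT; apply: eq_bigr => l _.
by rewrite rtK !mxE.
Qed.

Lemma U_b (hb : forall M, minimal_induced R e M -> cyclotomic R e (~: M))
  (P : 'M[C]_n) d : P \is unitarymx -> Ac = invmx P *m diag_mx d *m P ->
  forall i j a b, d 0 i = toC a -> d 0 j = toC b -> 2 < a -> 2 < b -> i = j.
Proof.
move=> Pu hA i j a b hi hj ha hb'.
apply: NNPP => hij.
have o1 : dotC (fun t => P i (rt t)) (fun t => P j (rt t)) = 0.
  by rewrite dot_rows // (introF eqP hij).
have n1 : dotC (fun t => P i (rt t)) (fun t => P i (rt t)) != 0.
  by rewrite dot_rows // eqxx oner_eq0.
have n2 : dotC (fun t => P j (rt t)) (fun t => P j (rt t)) != 0.
  by rewrite dot_rows // eqxx oner_eq0.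
have [x [y [ex ey nx ny o]]] :=
  real_pair (eig_rows Pu hA hi) (eig_rows Pu hA hj) o1 n1 n2.
exact: (b_core hb ex ey ha hb' nx ny o).
Qed.

Lemma toC_sub_gt0 (a : R) : 2 < a -> 0 < toC a - toC 2.
Proof. by move=> ha; rewrite -rmorphB -(rmorph0 toC) ltcR subr_gt0. Qed.

Lemma U_a (v : T) (hv : cyclotomic R e ([set: T] :\ v))
  (P : 'M[C]_n) d : P \is unitarymx -> Ac = invmx P *m diag_mx d *m P ->
  forall i j a b, d 0 i = toC a -> d 0 j = toC b -> 2 < a -> 2 < b -> i = j.
Proof.
move=> Pu hA i j a b hi hj ha hb.
apply: NNPP => /eqP hij.
have Punit := unitarymx_unit Pu.
pose k0 := rt v.
pose pi := P i k0; pose pj := P j k0.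
pose al : C := if pi == 0 then 1 else pj.
pose be : C := if pi == 0 then 0 else - pi.
pose c : 'rV[C]_n := al *: delta_mx 0 i + be *: delta_mx 0 j.
have cE k : c 0 k = (if k == i then al else if k == j then be else 0).
  rewrite !mxE /=; case: (eqVneq k i) => [->|ki].
    case: eqP => [ji|_]; first by move: hij; rewrite ji eqxx.
    by rewrite mulr1 mulr0 addr0.
  by case: (eqVneq k j) => [_|kj]; rewrite ?mulr1 ?mulr0 ?add0r ?addr0.
pose w := c *m P.
pose f t := w 0 (rt t).
have vf : vec_of [set: T] f = w.
  by apply/rowP => l; rewrite mxE /f rtK.
have hT : forall x, x \notin [set: T] -> f x = 0 by move=> x; rewrite in_setT.
have hQ : Qc f = (c *m diag_mx d *m c^t*) 0 0.
  rewrite (form_mx hT) vf /w hA invmx_unitary // trCmul !mulmxA.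
  by rewrite !mulmxtVK.
have hN : Nc f = (c *m c^t*) 0 0.
  by rewrite (norm_mx hT) vf /w trCmul !mulmxA mulmxtVK.
have hz : forall x, x \notin [set: T] :\ v -> f x = 0.
  move=> x; rewrite !inE andbT negbK => /eqP ->.
  rewrite /f /w /c mulmxDl -!scalemxAl -!rowE !mxE -/k0 -/pi -/pj /al /be.
  by case: eqP => [->|_]; ring.
have hle := @rayleigh_le ([set: T] :\ v) 2 (fun mu hmu => (andP (hv mu hmu)).2) f hz.
rewrite hQ hN quad_diag quad_id in hle.
have {hle} hle : \sum_k (d 0 k - toC 2) * (c 0 k * (c 0 k)^*) <= 0.
  rewrite (eq_bigr (fun k => d 0 k * (c 0 k * (c 0 k)^*) -
     toC 2 * (c 0 k * (c 0 k)^*))); last by move=> k _; rewrite mulrBl.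
  by rewrite sumrB -mulr_sumr subr_le0.
have F0 k : 0 <= (d 0 k - toC 2) * (c 0 k * (c 0 k)^*).
  rewrite cE; case: eqP => [->|_].
    by rewrite mulr_ge0 ?mul_conjC_ge0 // hi ltW // toC_sub_gt0.
  case: eqP => [->|_].
    by rewrite mulr_ge0 ?mul_conjC_ge0 // hj ltW // toC_sub_gt0.
  by rewrite mul0r mulr0.
pose m := if pi == 0 then i else j.
have Fm : 0 < (d 0 m - toC 2) * (c 0 m * (c 0 m)^*).
  rewrite /m cE /al /be; case: (boolP (pi == 0)) => pi0.
    by rewrite eqxx hi mulr_gt0 ?toC_sub_gt0 // mul_conjC_gt0 oner_eq0.
  case: eqP => [ji|_]; first by move: hij; rewrite ji eqxx.
  by rewrite eqxx hj mulr_gt0 ?toC_sub_gt0 // mul_conjC_gt0 oppr_eq0.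
have : 0 < \sum_k (d 0 k - toC 2) * (c 0 k * (c 0 k)^*).
  rewrite (bigD1 m) //=; apply: ltr_wpDr => //.
  by apply: sumr_ge0 => k _.
by move=> /lt_geF; rewrite hle.
Qed.

Lemma eig_mup S mu : eigenvalue_of R e S mu = (0 < mup mu (cpoly R e S))%N.
Proof.
by rewrite /eigenvalue_of -XsubC_dvd ?dvdp_XsubCl // /cpoly monic_neq0 // char_poly_monic.
Qed.

Lemma salem_U (hbip : bipartite e) (hnc : ~ cyclotomic R e [set: T])
  (P : 'M[C]_n) d : P \is unitarymx -> Ac = invmx P *m diag_mx d *m P ->
  (forall i j a b, d 0 i = toC a -> d 0 j = toC b -> 2 < a -> 2 < b -> i = j) ->
  salem_graph R e.
Proof.
move=> Pu hA U.
have Punit := unitarymx_unit Pu.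
have hm mu : mup mu (cpoly R e [set: T]) = #|[pred k | d 0 k == toC mu]|.
  exact: (mup_spec (mulVmx Punit) hA mu).
have hsym mu : eigenvalue_of R e [set: T] (- mu) = eigenvalue_of R e [set: T] mu.
  by rewrite !eig_mup mup_sym.
have [lam [rl hl]] : exists lam, eigenvalue_of R e [set: T] lam /\ 2 < lam.
  apply: NNPP => hn; apply: hnc => mu hmu; apply/andP; split.
    rewrite leNgt; apply/negP => hlt; apply: hn; exists (- mu); split.
      by rewrite hsym.
    lra.
  rewrite leNgt; apply/negP => hlt; apply: hn; by exists mu.
have ex_k mu : eigenvalue_of R e [set: T] mu -> exists k, d 0 k = toC mu.
  rewrite eig_mup hm => /card_gt0P [k]; rewrite inE => /eqP hk; by exists k.
have [k0 hk0] := ex_k _ rl.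
have uniq mu : eigenvalue_of R e [set: T] mu -> 2 < mu -> mu = lam.
  move=> rm hmu; have [k hk] := ex_k _ rm.
  have hkk := U k k0 mu lam hk hk0 hmu hl.
  by apply: complexI; rewrite -hk -hk0 hkk.
have m1 : mup lam (cpoly R e [set: T]) = 1%N.
  rewrite hm; apply/eqP; rewrite eqn_leq; apply/andP; split.
    apply/card_le1_eqP => x y; rewrite !inE => /eqP hx /eqP hy.
    exact: (U y x lam lam hy hx hl hl).
  by apply/card_gt0P; exists k0; rewrite inE hk0.
split => //; exists lam; split => //; split => //; split => //; split.
  by rewrite (mup_sym _ hbip).
move=> mu hmu hlt.
have : - mu = lam by apply: uniq; [rewrite hsym | lra].
by move=> <-; rewrite opprK.
Qed.

End S.

Close Scope sesquilinear_scope.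

Theorem theorem8 (R : realType) (T : finType) (e : rel T) :
  simple_graph e ->
  ((bipartite e /\ ~ cyclotomic R e setT /\
      (exists v : T, cyclotomic R e (setT :\ v))) ->
     salem_graph R e) /\
  ((bipartite e /\ ~ cyclotomic R e setT /\
      (forall M : {set T}, minimal_induced R e M -> cyclotomic R e (~: M))) ->
     salem_graph R e).
Proof.
move=> [esy _]; split.
  move=> [hbip [hnc [v hv]]].
  have [P [d [Pu dr hA]]] := spec_real (adj_sym R esy [set: T]).
  exact: (salem_U esy hbip hnc Pu hA (U_a esy hv Pu hA)).
move=> [hbip [hnc hb]].
have [P [d [Pu dr hA]]] := spec_real (adj_sym R esy [set: T]).
exact: (salem_U esy hbip hnc Pu hA (U_b esy hb Pu hA)).
Qed.
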